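(* Let $r\ge 1$ and $m\ge r$ be integers, and put $d_k(m,r)=\det\left(\binom{k+i+j}{m}\right)_{i,j=0}^{r-1}$ for $k\ge 0$. Then, as formal power series in $x$, $$(1-x)^{r(m-r+1)+1}\sum_{k\ge 0} d_k(m,r)\,x^k=(-1)^{\binom r2}\,x^{m-r+1}A_{m,r}(x),$$ where $A_{m,r}(x)=\sum_{j} N(r,m-r+1,j)\,x^j$ is a polynomial in $x$ of degree at most $(r-1)(m-r)$.
   Context: For an integer $x$ and integer $r>0$ the rising factorial is $x^{(r)}=x(x+1)\cdots(x+r-1)$, with $x^{(0)}=1$. For a positive integer $r$ and integers $n,k$ the $r$-Hoggatt binomial is defined by $\left\langle \begin{smallmatrix} n\\ k\end{smallmatrix}\right\rangle_r=\prod_{j=1}^{k}\frac{(n-k+j)^{(r)}}{(j)^{(r)}}$ for $0\le k\le n$ (empty product $=1$), and $0$ otherwise. For integers $r\ge1$, $s\ge 1$, the $r$-dimensional Narayana numbers $N(r,s,j)$ ($j\ge 0$) are the coefficients in $$(1-x)^{rs+1}\sum_{k\ge0}\left\langle \begin{matrix} k+s\\ s\end{matrix}\right\rangle_r x^k=\sum_{j\ge 0}N(r,s,j)\,x^j ,$$ and the left-hand side is a polynomial in $x$ of degree at most $(r-1)(s-1)$. *)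

(* Defs.v *)
From mathcomp Require Import all_boot all_order all_algebra.
Set Implicit Arguments. Unset Strict Implicit. Unset Printing Implicit Defensive.
Import GRing.Theory Num.Theory.
Local Open Scope ring_scope.

Definition rising (x r : nat) : rat := \prod_(i < r) (x + i)%:R.

Definition hoggatt (r n k : nat) : rat :=
  if (k <= n)%N then \prod_(1 <= j < k.+1) (rising (n - k + j) r / rising j r)
  else 0.

(* Coefficient of x^n in the product of two formal power series given by
   their coefficient sequences. *)
Definition ps_mul_coef (a b : nat -> rat) (n : nat) : rat :=
  \sum_(i < n.+1) a i * b (n - i)%N.

(* Coefficients of the polynomial (1 - x)^e. *)
Definition one_minus_x_pow (e : nat) (i : nat) : rat := (-1) ^+ i * ('C(e, i))%:R.

(* r-dimensional Narayana numbers N(r,s,j): coefficient of x^j in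
   (1-x)^(rs+1) * sum_k <k+s, s>_r x^k. *)
Definition narayana (r s j : nat) : rat :=
  ps_mul_coef (one_minus_x_pow (r * s + 1)) (fun k => hoggatt r (k + s) s) j.

Definition dk (m r k : nat) : rat :=
  \det (\matrix_(i < r, j < r) ('C(k + i + j, m))%:R).

(* Main.v *)
Require Import Defs.
From mathcomp Require Import all_boot all_order all_algebra.
From mathcomp Require Import zify ring lra.
Import GRing.Theory Num.Theory.
Local Open Scope ring_scope.
Set Implicit Arguments. Unset Strict Implicit. Unset Printing Implicit Defensive.

Lemma sum_widen (R : nmodType) a b (F : nat -> R) : (a <= b)%N ->
  (forall u, (a <= u)%N -> (u < b)%N -> F u = 0) ->
  \sum_(u < a) F u = \sum_(u < b) F u.
Proof.
move=> ab H; rewrite (big_ord_widen _ _ ab) big_mkcond; apply: eq_bigr => u _.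
case: ifP => // /negbT; rewrite -leqNgt => h; rewrite H //.
Qed.

Lemma ffactD y s t : (y ^_ (s + t) = y ^_ s * (y - s) ^_ t)%N.
Proof.
rewrite !ffact_prod big_split_ord /=; congr (_ * _)%N.
by apply: eq_bigr => i _; rewrite subnDA.
Qed.

Lemma binM y s t : (s <= y)%N ->
  ('C(y, s + t) * 'C(s + t, s) = 'C(y, s) * 'C(y - s, t))%N.
Proof.
move=> sy.
have pos : (0 < s`! * t`!)%N by rewrite muln_gt0 !fact_gt0.
apply/eqP; rewrite -(eqn_pmul2r pos); apply/eqP.
have e1 : ('C(s + t, s) * (s`! * t`!) = (s + t)`!)%N.
  by have := bin_fact (leq_addr t s); rewrite addKn.
rewrite -mulnA e1 bin_ffact ffactD -!bin_ffact; ring.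
Qed.

Lemma prod_shift a s :
  (\prod_(1 <= j < s.+1) (a + j) = 'C(a + s, s) * s`!)%N.
Proof.
elim: s => [|s IH]; first by rewrite big_geq // bin0.
rewrite big_nat_recr //= IH factS.
have := mul_bin_diag (a + s.+1) s; rewrite addnS /= => h.
move: h; rewrite ?addnS /=; move=> h. nia.
Qed.


Definition Rmx r : 'M[rat]_r := \matrix_(i < r, j < r) ((i + j == r.-1)%N%:R).

Lemma detR r : \det (Rmx r) = (-1) ^+ 'C(r, 2).
Proof.
elim: r => [|r IH]; first by rewrite det_mx00.
rewrite (expand_det_row _ ord0) (bigD1 ord_max) //= big1 ?addr0; last first.
  move=> j /negbTE jn; rewrite !mxE add0n.
  have -> : (j == r :> nat) = false by rewrite -jn; apply/eqP/eqP => [h|->//]; apply/val_inj.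
  by rewrite mul0r.
rewrite !mxE add0n eqxx mul1r /cofactor add0n.
have -> : row' ord0 (col' ord_max (Rmx r.+1)) = Rmx r.
  apply/matrixP => i j; rewrite !mxE lift0 lift_max /=.
  by case: r {IH} i j => [[]//|r] i j /=; rewrite addSn.
by rewrite IH -exprD binS bin1 addnC.
Qed.

Lemma det_upper_bin r : \det (\matrix_(i < r, j < r) ('C(j, i))%:R : 'M[rat]_r) = 1.
Proof.
rewrite -det_tr det_trig.
  by rewrite big1 // => i _; rewrite !mxE binn.
by apply/is_trig_mxP => i j ij; rewrite !mxE bin_small.
Qed.


Lemma det_shift_bin r z :
  \det (\matrix_(i < r, t < r) ('C(z + i, t))%:R : 'M[rat]_r) = 1.
Proof.
pose L : 'M[rat]_r := \matrix_(i < r, u < r) ('C(i, u))%:R.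
pose U : 'M[rat]_r := \matrix_(u < r, t < r) ((u <= t)%N * 'C(z, t - u))%:R.
have -> : \matrix_(i < r, t < r) ('C(z + i, t))%:R = L *m U.
  apply/matrixP => i t; rewrite !mxE.
  rewrite (addnC z) -binomial.Vandermonde natr_sum.
  rewrite (eq_bigr (fun u : 'I_t.+1 => ('C(i, u) * ((u <= t)%N * 'C(z, t - u)))%:R : rat)); last first.
    by move=> u _; rewrite -ltnS ltn_ord mul1n.
  rewrite (@sum_widen _ t.+1 r (fun u => ('C(i, u) * ((u <= t)%N * 'C(z, t - u)))%:R : rat)) //.
  - by apply: eq_bigr => u _; rewrite !mxE -natrM.
  - by move=> u hu _; rewrite leqNgt hu mul0n muln0.
rewrite det_mulmx det_trig; last by apply/is_trig_mxP => i j ij; rewrite !mxE bin_small.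
rewrite -det_tr det_trig; last first.
  by apply/is_trig_mxP => i j ij; rewrite !mxE leqNgt ij mul0n.
by rewrite !big1 ?mulr1 // => i _; rewrite !mxE ?leqnn ?subnn ?bin0 ?binn.
Qed.


Lemma detA r k s : (0 < r)%N ->
  \det (\matrix_(i < r, t < r) ('C(k + i, s + t))%:R : 'M[rat]_r) *
    \prod_(t < r) ('C(s + t, s))%:R =
  if (s <= k)%N then \prod_(i < r) ('C(k + i, s))%:R else 0.
Proof.
move=> r0; case: leqP => sk; last first.
  case: r r0 => // r _.
  rewrite (expand_det_row _ ord0) big1 ?mul0r // => j _.
  by rewrite !mxE addn0 bin_small ?mul0r //; lia.
pose c : 'rV[rat]_r := \row_t ('C(s + t, s))%:R.
pose a : 'rV[rat]_r := \row_i ('C(k + i, s))%:R.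
have e : \matrix_(i < r, t < r) ('C(k + i, s + t))%:R *m diag_mx c =
   diag_mx a *m \matrix_(i < r, t < r) ('C(k - s + i, t))%:R.
  rewrite mul_diag_mx mul_mx_diag; apply/matrixP => i t; rewrite !mxE -!natrM.
  rewrite binM; last by lia.
  by have -> : (k + i - s = k - s + i)%N by lia.
have := congr1 determinant e.
rewrite !det_mulmx !det_diag det_shift_bin mulr1.
have -> : \prod_i c 0 i = \prod_(t < r) ('C(s + t, s))%:R by apply: eq_bigr => i _; rewrite mxE.
move=> ->; by apply: eq_bigr => i _; rewrite mxE.
Qed.


Lemma dk_fact m r k : (1 <= r)%N -> (r <= m)%N ->
  dk m r k = (-1) ^+ 'C(r, 2) *
    \det (\matrix_(i < r, t < r) ('C(k + i, (m - r + 1) + t))%:R : 'M[rat]_r).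
Proof.
move=> r1 rm.
pose A := \matrix_(i < r, t < r) ('C(k + i, (m - r + 1) + t))%:R : 'M[rat]_r.
pose U : 'M[rat]_r := \matrix_(u < r, j < r) ('C(j, u))%:R.
have eAR : A *m Rmx r = \matrix_(i < r, u < r) ('C(k + i, m - u))%:R.
  apply/matrixP => i u; rewrite !mxE (bigD1 (rev_ord u)) //= big1 ?addr0.
    rewrite !mxE /=.
    have -> : (r - u.+1 + u == r.-1)%N by apply/eqP; have := ltn_ord u; lia.
    rewrite mulr1; congr (_%:R); congr 'C(_, _); have := ltn_ord u; lia.
  move=> v vn; rewrite !mxE.
  have -> : (v + u == r.-1)%N = false.
    apply/negbTE; apply: contra vn => /eqP h; apply/eqP/val_inj => /=; lia.
  by rewrite mulr0.
have eM : \matrix_(i < r, j < r) ('C(k + i + j, m))%:R = (A *m Rmx r) *m U.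
  rewrite eAR; apply/matrixP => i j; rewrite !mxE.
  have -> : (k + i + j = j + (k + i))%N by lia.
  rewrite -binomial.Vandermonde natr_sum.
  rewrite -(@sum_widen _ r m.+1 (fun u => ('C(j, u) * 'C(k + i, m - u))%:R : rat)) ?(leqW rm) //.
  - by apply: eq_bigr => u _; rewrite !mxE -natrM mulnC.
  - by move=> u hu _; rewrite bin_small ?mul0n //; apply: leq_trans (ltn_ord j) hu.
rewrite /dk eM !det_mulmx detR det_upper_bin mulr1 mulrC.
by congr (_ * _); rewrite !mxE.
Qed.


Lemma prod_rising z r s :
  \prod_(1 <= j < s.+1) rising (z + j) r =
  ((\prod_(i < r) 'C(z + i + s, s)) * (\prod_(i < r) s`!))%N%:R.
Proof.
rewrite /rising exchange_big /= -big_split /= natr_prod; apply: eq_bigr => i _.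
rewrite -prod_shift natr_prod; apply: eq_big_nat => j _; congr (_%:R); lia.
Qed.

Lemma hoggatt_eq r k s : (s <= k)%N ->
  hoggatt r k s * \prod_(t < r) ('C(s + t, s))%:R = \prod_(i < r) ('C(k + i, s))%:R.
Proof.
move=> sk; rewrite /hoggatt sk prodf_div.
have := prod_rising (k - s) r s; rewrite (eq_big_nat _ _ (F2 := fun j => rising (k - s + j) r)) // => ->.
have := prod_rising 0 r s; rewrite (eq_big_nat _ _ (F2 := fun j => rising j r)) // => ->.
have e1 : \prod_(i < r) 'C(k - s + i + s, s) = \prod_(i < r) 'C(k + i, s).
  by apply: eq_bigr => i _; congr 'C(_, _); lia.
have e2 : \prod_(i < r) 'C(0 + i + s, s) = \prod_(i < r) 'C(s + i, s).
  by apply: eq_bigr => i _; congr 'C(_, _); lia.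
rewrite e1 e2 !natrM -!natr_prod.
have h1 : (\prod_(i < r) 'C(s + i, s))%:R != 0 :> rat.
  by rewrite pnatr_eq0 -lt0n prodn_gt0 // => i; rewrite bin_gt0 leq_addr.
have h2 : (\prod_(i < r) s`!)%:R != 0 :> rat.
  by rewrite pnatr_eq0 -lt0n prodn_gt0 // => i; rewrite fact_gt0.
by field; rewrite h1 h2.
Qed.


Lemma dk_hog m r k : (1 <= r)%N -> (r <= m)%N ->
  dk m r k = (-1) ^+ 'C(r, 2) * hoggatt r k (m - r + 1).
Proof.
move=> r1 rm; rewrite dk_fact //; congr (_ * _).
set s := (m - r + 1)%N.
have hP : \prod_(t < r) ('C(s + t, s))%:R != 0 :> rat.
  by rewrite -natr_prod pnatr_eq0 -lt0n prodn_gt0 // => i; rewrite bin_gt0 leq_addr.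
have := detA k s r1; case: leqP => sk.
  rewrite -(hoggatt_eq r sk) => /(mulIf hP); by [].
move/eqP; rewrite mulf_eq0 (negbTE hP) orbF => /eqP ->.
by rewrite /hoggatt leqNgt sk.
Qed.

Lemma part1 r m : (1 <= r)%N -> (r <= m)%N -> forall n : nat,
     ps_mul_coef (one_minus_x_pow (r * (m - r + 1) + 1)) (dk m r) n =
     (-1) ^+ 'C(r, 2) *
       (if (m - r + 1 <= n)%N then narayana r (m - r + 1) (n - (m - r + 1)) else 0).
Proof.
move=> r1 rm n; set s := (m - r + 1)%N; set c := one_minus_x_pow _.
rewrite /ps_mul_coef.
under eq_bigr => i _ do rewrite dk_hog // mulrCA.
rewrite -mulr_sumr; congr (_ * _).
case: leqP => sn; last first.
  by rewrite big1 // => i _; rewrite /hoggatt leqNgt (leq_ltn_trans (leq_subr _ _) sn) mulr0.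
rewrite /narayana /ps_mul_coef.
rewrite (eq_bigr (fun i : 'I_(n - s).+1 => c i * hoggatt r (n - i) s)); last first.
  move=> i _; congr (_ * hoggatt _ _ _); have := ltn_ord i; lia.
rewrite (@sum_widen _ (n - s).+1 n.+1 (fun i => c i * hoggatt r (n - i) s)) //.
- lia.
- by move=> u h1 h2; rewrite /hoggatt ifF ?mulr0 //; apply/negbTE; rewrite -ltnNge; lia.
Qed.


Definition Dop n (g : rat -> rat) x :=
  \sum_(i < n.+1) (-1) ^+ i * ('C(n, i))%:R * g (x - i%:R).

Lemma D_ext n g h x : (forall y, g y = h y) -> Dop n g x = Dop n h x.
Proof. by move=> e; apply: eq_bigr => i _; rewrite e. Qed.

Lemma D_lin n a b g h x :
  Dop n (fun y => a * g y + b * h y) x = a * Dop n g x + b * Dop n h x.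
Proof.
rewrite /Dop !mulr_sumr -big_split; apply: eq_bigr => i _ /=; ring.
Qed.

Lemma D_shift n g x : Dop n (fun y => g (y - 1)) x = Dop n g (x - 1).
Proof. by apply: eq_bigr => i _; rewrite addrAC. Qed.

Lemma D0 g x : Dop 0 g x = g x.
Proof. by rewrite /Dop big_ord_recl big_ord0 addr0 /= expr0 mul1r bin0 mul1r subr0. Qed.

Lemma DS n g x : Dop n.+1 g x = Dop n (fun y => g y - g (y - 1)) x.
Proof.
pose A := \sum_(i < n.+2) (-1) ^+ i * ('C(n, i))%:R * g (x - i%:R).
pose B := \sum_(i < n.+1) (-1) ^+ i * ('C(n, i))%:R * g (x - i%:R - 1).
have eA1 : A = \sum_(i < n.+1) (-1) ^+ i * ('C(n, i))%:R * g (x - i%:R).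
  by rewrite /A big_ord_recr /= bin_small // mulr0 mul0r addr0.
have eA2 : A = g x + \sum_(i < n.+1) (-1) ^+ i.+1 * ('C(n, i.+1))%:R * g (x - i%:R - 1).
  rewrite /A big_ord_recl /= expr0 bin0 mul1r mul1r subr0; congr (_ + _).
  by apply: eq_bigr => i _; rewrite /bump leq0n add1n -addn1 natrD opprD addrA.
have -> : Dop n.+1 g x = A - B.
  rewrite eA2 /Dop big_ord_recl /= expr0 bin0 !mul1r subr0 -addrA; congr (_ + _).
  rewrite /B -sumrB; apply: eq_bigr => i _ /=.
  rewrite /bump leq0n add1n binS natrD exprS -[(i.+1)%:R]natr1 opprD addrA; ring.
rewrite eA1 /B /Dop -sumrB; apply: eq_bigr => i _; ring.
Qed.

Definition V n g := forall x, Dop n g x = 0.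

Lemma V_succ n g : V n g -> V n.+1 g.
Proof.
move=> h x; rewrite DS.
rewrite (D_ext _ (h := fun y => 1 * g y + (-1) * g (y - 1))); last by move=> y; ring.
by rewrite D_lin D_shift !h; ring.
Qed.

Lemma V_mul n g a b : V n g -> V n.+1 (fun y => g y * (a * y + b)).
Proof.
elim: n g => [|n IH] g hg x.
  have g0 : forall y, g y = 0 by move=> y; rewrite -(hg y) D0.
  rewrite (D_ext _ (h := fun y => 0 * g y + 0 * g y)); last by move=> y; rewrite g0; ring.
  by rewrite D_lin; ring.
rewrite DS.
rewrite (D_ext _ (h := fun y => 1 * ((g y - g (y - 1)) * (a * y + b)) + a * g (y - 1))); last first.
  by move=> y; ring.
rewrite D_lin D_shift hg mulr0 addr0.
have hd : V n (fun y => g y - g (y - 1)) by move=> y; rewrite -DS hg.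
by rewrite (IH _ hd) mulr0.
Qed.

Lemma V_prod (T : Type) (sq : seq T) (a b : T -> rat) :
  V (size sq).+1 (fun y => \prod_(t <- sq) (a t * y + b t)).
Proof.
elim: sq => [|t sq IH] x /=.
  rewrite (D_ext _ (h := fun y => 1)); last by move=> y; rewrite big_nil.
  by rewrite DS (D_ext _ (h := fun y => 0 * 1 + 0 * 1)) ?D_lin; [ring | move=> y; ring].
rewrite (D_ext _ (h := fun y => (\prod_(t <- sq) (a t * y + b t)) * (a t * y + b t))).
  by apply: V_mul.
by move=> y; rewrite big_cons mulrC.
Qed.


Definition G s r (y : rat) :=
  \prod_(p : 'I_s * 'I_r) ((p.1.+1 + p.2)%N%:R^-1 * y + 1).

Lemma G_hog r s k : hoggatt r (k + s) s = G s r k%:R.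
Proof.
rewrite /hoggatt leq_addl addnK big_add1 /= big_mkord /G.
rewrite -(pair_bigA _ (fun (i : 'I_s) (j : 'I_r) => (i.+1 + j)%N%:R^-1 * k%:R + 1)) /=.
apply: eq_bigr => j _; rewrite /rising -prodf_div; apply: eq_bigr => i _.
have h : (j.+1 + i)%N%:R != 0 :> rat by rewrite pnatr_eq0.
have e : (j.+1 + i)%N%:R = 1 + j%:R + i%:R :> rat by rewrite natrD -natr1; ring.
rewrite -(addnA k) natrD; field; by rewrite -e.
Qed.

Lemma size_ie (T : finType) : size (index_enum T) = #|T|.
Proof. by rewrite cardT -(deprecated_filter_index_enum predT) filter_predT. Qed.

Lemma G_V s r : V (s * r).+1 (G s r).
Proof.
have := V_prod (index_enum (prod 'I_s 'I_r))
  (fun p => (p.1.+1 + p.2)%N%:R^-1) (fun _ => 1).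
by rewrite size_ie card_prod !card_ord.
Qed.

Lemma G_zero s r n : (1 <= n)%N -> (n <= r + s - 1)%N -> (1 <= s)%N -> (1 <= r)%N ->
  G s r (- n%:R) = 0.
Proof.
move=> n1 nrs s1 r1.
have h1 : (minn n s - 1 < s)%N by rewrite /minn; case: (ltnP n s); lia.
have h2 : (n - minn n s < r)%N by rewrite /minn; case: (ltnP n s); lia.
rewrite /G (bigD1 (Ordinal h1, Ordinal h2)) //= mulrC.
have -> : ((minn n s - 1).+1 + (n - minn n s))%N = n by rewrite /minn; case: (ltnP n s); lia.
have hn : n%:R != 0 :> rat by rewrite pnatr_eq0 -lt0n.
by rewrite mulrN mulVf // addrC subrr mulr0.
Qed.


Lemma part2 r m : (1 <= r)%N -> (r <= m)%N ->
  forall j : nat, ((r - 1) * (m - r) < j)%N -> narayana r (m - r + 1) j = 0.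
Proof.
move=> r1 rm j hj; set s := (m - r + 1)%N.
have s1 : (1 <= s)%N by rewrite /s; lia.
have key : (r * s = (r - 1) * (m - r) + r + s - 1)%N.
  rewrite /s; case: r r1 rm {hj s s1} => // r' _ rm.
  have [d ->] : exists d, m = (r'.+1 + d)%N by exists (m - r'.+1)%N; lia.
  have -> : (r'.+1 + d - r'.+1 = d)%N by lia.
  have -> : (r'.+1 - 1 = r')%N by lia.
  have -> : (d + 1 = d.+1)%N by lia.
  rewrite !mulSn !mulnS; lia.
set E := (r * s + 1)%N.
pose H i := (-1) ^+ i * ('C(E, i))%:R * G s r (j%:R - i%:R).
have e1 : narayana r s j = \sum_(i < j.+1) H i.
  rewrite /narayana /ps_mul_coef; apply: eq_bigr => i _.
  rewrite /one_minus_x_pow /H G_hog natrB //; have := ltn_ord i; lia.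
have e2 : Dop E (G s r) j%:R = \sum_(i < E.+1) H i by [].
have e3 : Dop E (G s r) j%:R = 0.
  by have := G_V s r; rewrite /E addn1 mulnC; apply.
rewrite e1 (@sum_widen _ j.+1 (j + E).+1 H); [|lia|]; last first.
  move=> u hu hu2; rewrite /H.
  case: (leqP u E) => hE; last by rewrite bin_small // mulr0 mul0r.
  rewrite -opprB -natrB; last by lia.
  rewrite G_zero ?mulr0 //; lia.
rewrite -(@sum_widen _ E.+1 (j + E).+1 H); [by rewrite -e2 e3|lia|].
by move=> u hu _; rewrite /H bin_small // mulr0 mul0r.
Qed.

Theorem theorem2 (r m : nat) (hr : (1 <= r)%N) (hm : (r <= m)%N) :
  (forall n : nat,
     ps_mul_coef (one_minus_x_pow (r * (m - r + 1) + 1)) (dk m r) n =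
     (-1) ^+ 'C(r, 2) *
       (if (m - r + 1 <= n)%N then narayana r (m - r + 1) (n - (m - r + 1)) else 0))
  /\ (forall j : nat, ((r - 1) * (m - r) < j)%N -> narayana r (m - r + 1) j = 0).
Proof.
split; [exact: part1 | exact: part2].
Qed.
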